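(* Let $G$ be a finite simple undirected graph with adjacency matrix $A$, and let $a,b$ be vertices of $G$. Then the closure in $\mathbb{C}$ of the set $\{\exp(\mathrm{i}tA)_{a,b} : t\ge 0\}$ is invariant under complex conjugation. *)

(* Defs.v *)
From HB Require Import structures.
From mathcomp Require Import all_boot all_order all_algebra.
From mathcomp Require Import complex.
From mathcomp Require Import all_classical all_reals all_analysis.
Set Implicit Arguments. Unset Strict Implicit. Unset Printing Implicit Defensive.
Import Order.TTheory GRing.Theory Num.Theory.
Import numFieldTopology.Exports numFieldNormedType.Exports.
Local Open Scope classical_set_scope.
Local Open Scope ring_scope.

Definition cplx (R : realType) : numClosedFieldType := R[i].

Definition RtoC (R : realType) (t : R) : cplx R := (t%:C)%C.

Definition expmx (R : realType) (n : nat) (M : 'M[cplx R]_n.+1)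
  : 'M[cplx R]_n.+1 :=
  \matrix_(a, b) limn (series (fun k : nat => (M ^+ k) a b / (k`!)%:R)).

Definition simple_graph (n : nat) (e : rel 'I_n.+1) : Prop :=
  (forall x, ~~ e x x) /\ (forall x y, e x y = e y x).

Definition adjmx (R : realType) (n : nat) (e : rel 'I_n.+1) : 'M[cplx R]_n.+1 :=
  \matrix_(x, y) (if e x y then 1 else 0).

(* Main.v *)
Require Import Defs.
From HB Require Import structures.
From mathcomp Require Import all_boot all_order all_algebra.
From mathcomp Require Import complex.
From mathcomp Require Import all_classical all_reals all_analysis.
From mathcomp Require Import ring lra.
Import Order.TTheory GRing.Theory Num.Theory.
Import numFieldTopology.Exports numFieldNormedType.Exports.
Set Implicit Arguments. Unset Strict Implicit. Unset Printing Implicit Defensive.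
Local Open Scope classical_set_scope.
Local Open Scope ring_scope.

Definition ex (R : realType) (x : R) : cplx R := (cos x +i* sin x)%C.

Lemma exD (R : realType) (x y : R) : ex (x + y) = ex x * ex y.
Proof.
rewrite /ex cosD sinD /=; congr (_ +i* _)%C; rewrite /GRing.mul /=; ring.
Qed.

Lemma ex0 (R : realType) : ex (0 : R) = 1.
Proof. by rewrite /ex cos0 sin0. Qed.

Lemma norm_ex (R : realType) (x : R) : `|ex x| = 1.
Proof.
rewrite normc_def /= cos2Dsin2 sqrtr1 //.
Qed.

Lemma exN (R : realType) (x : R) : ex (- x) * ex x = 1.
Proof. by rewrite -exD addNr ex0. Qed.

Lemma normc_real (R : realType) (x : R) : `|(x%:C)%C : cplx R| = (`|x|%:C)%C.
Proof. by rewrite normc_def /= expr0n /= addr0 sqrtr_sqr. Qed.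

Lemma normc_le (R : realType) (x y : R) :
  `|(x +i* y)%C : cplx R| <= ((`|x| + `|y|)%:C)%C.
Proof.
have -> : (x +i* y)%C = (x%:C)%C + 'i * (y%:C)%C :> cplx R.
  by apply/eqP; rewrite eq_complex /= !(mul0r, mul1r, subr0, addr0, add0r) !eqxx.
rewrite raddfD /=; apply: le_trans (ler_normD _ _) _.
by rewrite normrM normCi mul1r !normc_real.
Qed.

Lemma ipow (R : realType) (x : R) (k : nat) :
  ('i * RtoC x)^+k = (((~~ odd k)%:R * (-1)^+k./2 * x^+k) +i*
                      ((odd k)%:R * (-1)^+k.-1./2 * x^+k))%C.
Proof.
elim: k => [|k IH].
  by apply/eqP; rewrite eq_complex /= !(mul1r, mul0r, expr0) !eqxx.
rewrite exprSr IH /RtoC; apply/eqP; rewrite eq_complex /=.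
case Ho: (odd k) => /=.
  have Hk : k = (k./2).*2.+1 by rewrite -[k in LHS]odd_double_half Ho.
  have -> : uphalf k = (k./2).+1 by rewrite uphalf_half Ho.
  have -> : k.-1./2 = k./2 by rewrite {1}Hk /= doubleK.
  rewrite !exprS; apply/andP; split; apply/eqP; ring.
have -> : uphalf k = k./2 by rewrite uphalf_half Ho.
rewrite !exprS; apply/andP; split; apply/eqP; ring.
Qed.

Lemma term_eq (R : realType) (x : R) (k : nat) :
  ('i * RtoC x)^+k / (k`!)%:R = ((cos_coeff x k) +i* (sin_coeff x k))%C.
Proof.
rewrite ipow -(rmorph_nat (real_complex R)) -fmorphV /=.
by apply/eqP; rewrite eq_complex /= !(mulr0, subr0, addr0, add0r) !eqxx.
Qed.

Lemma series_cplx (R : realType) (f g : nat -> R) (N : nat) :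
  series (fun k => ((f k +i* g k)%C : cplx R)) N = ((series f N) +i* (series g N))%C.
Proof.
rewrite /series /=; elim: N => [|N IH]; first by rewrite !big_geq.
by rewrite !big_nat_recr //= IH.
Qed.

Lemma cvg_cplx (R : realType) (u v : nat -> R) (a b : R) :
  u @ \oo --> a -> v @ \oo --> b ->
  (fun N => ((u N +i* v N)%C : cplx R)) @ \oo --> ((a +i* b)%C : cplx R).
Proof.
move=> /cvgrPdist_lt Hu /cvgrPdist_lt Hv; apply/cvgrPdist_lt => e.
rewrite ltcE /= => /andP[/eqP Ie Re0].
have r0 : 0 < complex.Re e / 2 by rewrite divr_gt0.
move: (Hu _ r0) (Hv _ r0) => Hu' Hv'.
near=> N.
have h1 : `|a - u N| < complex.Re e / 2 by near: N.
have h2 : `|b - v N| < complex.Re e / 2 by near: N.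
have -> : ((a +i* b)%C : cplx R) - (u N +i* v N)%C = ((a - u N) +i* (b - v N))%C by [].
apply: le_lt_trans (normc_le _ _) _.
rewrite ltcE /= Ie eqxx /=.
by rewrite [complex.Re e](splitr (complex.Re e)) ltrD.
Unshelve. all: by end_near.
Qed.

Lemma series_ex (R : realType) (x : R) :
  series (fun k => ('i * RtoC x)^+k / (k`!)%:R) @ \oo --> ex x.
Proof.
have -> : series (fun k => ('i * RtoC x)^+k / (k`!)%:R) =
   (fun N => (((series (cos_coeff x) N) +i* (series (sin_coeff x) N))%C : cplx R)).
  apply: funext => N; rewrite -series_cplx; congr (series _ N).
  by apply: funext => k; rewrite term_eq.
apply: cvg_cplx.
  by rewrite unlock; exact: is_cvg_series_cos_coeff.
by rewrite unlock; exact: is_cvg_series_sin_coeff.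
Qed.

Lemma adj_herm (R : realType) (n : nat) (e : rel 'I_n.+1) :
  simple_graph e -> adjmx R e \is hermsymmx.
Proof.
move=> [_ Hs]; apply/is_hermitianmxP; rewrite expr0 scale1r.
apply/matrixP => i j; rewrite !mxE Hs.
by case: (e j i); rewrite ?conjC1 ?conjC0.
Qed.

Lemma pow_diag (C : numClosedFieldType) (m : nat) (A P : 'M[C]_m.+1) (d : 'rV[C]_m.+1) :
  P \in unitmx -> A = invmx P *m diag_mx d *m P ->
  forall k, A ^+ k = invmx P *m diag_mx (\row_j (d 0 j)^+k) *m P.
Proof.
move=> Punit HA; elim=> [|k IH].
  rewrite expr0 (_ : \row_j _ = const_mx 1); last by apply/rowP => j; rewrite !mxE expr0.
  by rewrite diag_const_mx mulmx1 mulVmx.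
rewrite exprSr -mulmxE IH {1}HA !mulmxA mulmxK //.
rewrite -[invmx P *m _ *m diag_mx d]mulmxA mulmx_diag.
have -> : \row_j ((\row_j0 d 0 j0 ^+ k) 0 j * d 0 j) = \row_j d 0 j ^+ k.+1.
  by apply/rowP => j; rewrite !mxE exprSr.
by [].
Qed.

Lemma spectral_form (R : realType) (n : nat) (e : rel 'I_n.+1) (a b : 'I_n.+1) :
  simple_graph e -> exists (w : 'I_n.+1 -> cplx R) (lam : 'I_n.+1 -> R),
  forall t : R, series (fun k => ((('i * RtoC t) *: adjmx R e)^+k) a b / (k`!)%:R) @ \oo
     --> \sum_j w j * ex (t * lam j).
Proof.
move=> Hg.
have [P [d [Punit [HA Hreal]]]] : exists (P : 'M[cplx R]_n.+1) (d : 'rV[cplx R]_n.+1),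
    P \in unitmx /\ adjmx R e = invmx P *m diag_mx d *m P /\ d \is a mxOver Num.real.
  have Hh := adj_herm R Hg.
  exists (spectralmx (adjmx R e)), (spectral_diag (adjmx R e)); split.
    exact: spectral_unit.
  split; last exact: hermitian_spectral_diag_real.
  by apply/orthomx_spectralP; exact: hermitian_normalmx.
have powA := pow_diag Punit HA.
exists (fun j => invmx P a j * P j b), (fun j => complex.Re (d 0 j)) => t.
have dE : forall j, d 0 j = RtoC (complex.Re (d 0 j)).
  move=> j; rewrite /RtoC RRe_real //.
  by move/mxOverP: Hreal => /(_ 0 j).
have -> : (fun k => ((('i * RtoC t) *: adjmx R e)^+k) a b / (k`!)%:R) =
   (fun k => \sum_j (invmx P a j * P j b) *
       (('i * RtoC (t * complex.Re (d 0 j)))^+k / (k`!)%:R)).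
  apply: funext => k; rewrite exprZn powA mul_mx_diag !mxE big_distrr /= mulr_suml.
  apply: eq_bigr => j _; rewrite !mxE dE /RtoC rmorphM /=.
  by rewrite !exprMn; ring.
have -> : series (fun k => \sum_j (invmx P a j * P j b) *
       (('i * RtoC (t * complex.Re (d 0 j)))^+k / (k`!)%:R)) =
   (fun N => \sum_j (invmx P a j * P j b) *
       series (fun k => ('i * RtoC (t * complex.Re (d 0 j)))^+k / (k`!)%:R) N).
  apply: funext => N; rewrite /series /= exchange_big /=.
  by apply: eq_bigr => j _; rewrite big_distrr.
apply: (@cvg_big _ _ +%R 0 xpredT (@add_continuous _)) => j _.
apply: cvgMl_tmp; exact: series_ex.
Qed.

Lemma cvg_conj (R : realType) (u : nat -> cplx R) (l : cplx R) :
  u @ \oo --> l -> (fun N => (u N)^*) @ \oo --> l^*.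
Proof.
move=> /cvgrPdist_lt H; apply/cvgrPdist_lt => eps eps0.
near=> N; rewrite -rmorphB norm_conjC.
by near: N; exact: H.
Unshelve. all: by end_near.
Qed.


Lemma adj_conj_pow (R : realType) (n : nat) (e : rel 'I_n.+1) (k : nat) :
  map_mx Num.conj ((adjmx R e)^+k) = (adjmx R e)^+k.
Proof.
elim: k => [|k IH].
  by rewrite !expr0; apply/matrixP => i j; rewrite !mxE; case: (i == j); rewrite /= ?conjC1 ?conjC0.
rewrite !exprSr -!mulmxE map_mxM IH; congr (_ *m _).
by apply/matrixP => i j; rewrite /adjmx !mxE; case: (e i j); rewrite ?rmorph1 ?rmorph0.
Qed.

Lemma conj_RtoC (R : realType) (t : R) : (RtoC t)^* = RtoC t.
Proof. by apply/CrealP; rewrite /RtoC complex_real. Qed.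

Lemma conj_sum (C : numClosedFieldType) (N : nat) (F : nat -> C) :
  (\sum_(0 <= k < N) F k)^* = \sum_(0 <= k < N) (F k)^*.
Proof. exact: rmorph_sum. Qed.

Lemma conj_term (C : numClosedFieldType) (c x : C) (k : nat) :
  (c ^+ k * x / (k`!)%:R)^* = (c^*) ^+ k * x^* / (k`!)%:R.
Proof. by rewrite rmorphM rmorphM fmorphV rmorph_nat rmorphXn. Qed.

Lemma scale_entry (C : pzRingType) (m : nat) (c : C) (M : 'M[C]_m) (i j : 'I_m) :
  (c *: M) i j = c * M i j.
Proof. by rewrite mxE. Qed.

Lemma conj_iR (R : realType) (t : R) : ('i * RtoC t)^* = 'i * RtoC (- t).
Proof.
have cE : forall z : cplx R, Num.Num_conj__canonical__GRing_RMorphism (cplx R) z = z^* by [].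
by rewrite rmorphM !cE conjCi conj_RtoC /RtoC rmorphN /= mulrN mulNr.
Qed.

Lemma term_conj (R : realType) (n : nat) (e : rel 'I_n.+1) (a b : 'I_n.+1) (t : R) (k : nat) :
  (((('i * RtoC t) *: adjmx R e)^+k) a b / (k`!)%:R)^* =
  ((('i * RtoC (- t)) *: adjmx R e)^+k) a b / (k`!)%:R.
Proof.
rewrite exprZn.
rewrite mxE.
rewrite conj_term conj_iR.
have -> : (((adjmx R e)^+k) a b)^* = ((adjmx R e)^+k) a b.
  by rewrite -[in RHS](adj_conj_pow R e k) mxE.
by rewrite exprZn mxE.
Qed.

Lemma conj_series (R : realType) (n : nat) (e : rel 'I_n.+1) (a b : 'I_n.+1) (t : R) (N : nat) :
  (series (fun k => ((('i * RtoC t) *: adjmx R e)^+k) a b / (k`!)%:R) N)^* =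
  series (fun k => ((('i * RtoC (- t)) *: adjmx R e)^+k) a b / (k`!)%:R) N.
Proof.
rewrite /series /= conj_sum; apply: eq_bigr => k _; exact: term_conj.
Qed.

Lemma recur (R : realType) (m : nat) (lam : 'I_m -> R) (delta : cplx R) (N0 : R) :
  0 < delta -> exists T : R, N0 <= T /\ forall j, `|ex (T * lam j) - 1| < delta.
Proof.
rewrite ltcE /= => /andP[/eqP Id Rd].
set r := complex.Re delta in Rd.
have r4 : 0 < r / 4%:R by rewrite divr_gt0.
pose N := (Num.trunc `|N0|).+1.
have HN : N0 < N%:R by apply: (le_lt_trans (ler_norm N0)); exact: truncnS_gt.
pose th (k : nat) (j : 'I_m) := (N * k)%:R * lam j.
pose v (k : nat) : 'rV[R]_(m + m) := row_mx (\row_j cos (th k j)) (\row_j sin (th k j)).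
pose K := [set w : 'rV[R]_(m + m) | forall i, `[-1, 1]%classic (w ord0 i)].
have cK : compact K.
  exact: (@rV_compact R (m + m) (fun=> `[-1, 1]%classic) (fun=> @segment_compact R _ _)).
have Kv : forall k, K (v k).
  move=> k i /=; rewrite -(splitK i); case: (fintype.split i) => j /=.
    by rewrite row_mxEl mxE /= in_itv /= -ler_norml cos_max.
  by rewrite row_mxEr mxE /= in_itv /= -ler_norml sin_max.
have [p [Kp clp]] : K `&` cluster (v @ \oo) !=set0.
  apply: cK; apply: (@filterE _ (nbhs \oo) _ (v @^-1` K)) => k; exact: Kv.
have near_pt : forall K0, exists2 k, (K0 <= k)%N & ball p (r / 4%:R) (v k).
  move=> K0.
  have FA : (v @ \oo) [set v k | k in [set k | (K0 <= k)%N]].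
    by apply: filterS (nbhs_infty_ge K0) => k Hk; exists k.
  have [y [[k Hk <-] Hy]] := clp _ _ FA (nbhsx_ballx p _ r4).
  by exists k.
have ballE : forall k i, ball p (r / 4%:R) (v k) -> `|p ord0 i - v k ord0 i| < r / 4%:R.
  by move=> k i [_ /(_ ord0 i)]; rewrite /ball /=.
have [k1 _ B1] := near_pt 0%N.
have [k2 Hk2 B2] := near_pt k1.+1.
have close : forall i, `|v k2 ord0 i - v k1 ord0 i| < r / 2%:R.
  move=> i; have h1 := ballE _ i B1; have h2 := ballE _ i B2.
  have -> : v k2 ord0 i - v k1 ord0 i = (p ord0 i - v k1 ord0 i) - (p ord0 i - v k2 ord0 i).
    by ring.
  apply: le_lt_trans (ler_normB _ _) _.
  lra.
exists ((N * (k2 - k1))%:R); split.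
  apply: ltW; apply: lt_le_trans HN _; rewrite ler_nat.
  by rewrite leq_pmulr // subn_gt0.
move=> j.
have cs1 := close (lshift m j); have cs2 := close (rshift m j).
rewrite /v !row_mxEl !row_mxEr !mxE in cs1 cs2.
have eT : (N * (k2 - k1))%:R * lam j = th k2 j - th k1 j.
  rewrite /th mulnBr natrB ?mulrBl //.
  by rewrite leq_mul2l ltnW ?orbT.
rewrite eT.
have -> : ex (th k2 j - th k1 j) - 1 = (ex (th k2 j) - ex (th k1 j)) * ex (- th k1 j).
  by rewrite exD mulrBl -[ex (th k1 j) * _]exD subrr ex0.
rewrite normrM norm_ex mulr1.
have -> : ex (th k2 j) - ex (th k1 j) =
   ((cos (th k2 j) - cos (th k1 j)) +i* (sin (th k2 j) - sin (th k1 j)))%C by [].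
apply: le_lt_trans (normc_le _ _) _.
rewrite ltcE /= Id eqxx /=.
lra.
Qed.

Lemma conjB (C : numClosedFieldType) (x y : C) : (x - y)^* = x^* - y^*.
Proof. exact: rmorphB. Qed.

Lemma closure_char (R : realType) (A : set (cplx R)) (p : cplx R) :
  closure A p <-> forall eps : cplx R, 0 < eps -> exists2 x, A x & `|p - x| < eps.
Proof.
split.
  move=> Hp eps eps0.
  have [x [Ax Bx]] := Hp _ (nbhsx_ballx p eps eps0).
  by exists x.
move=> H B /nbhs_ballP [e e0 HB].
have [x Ax hx] := H e e0.
by exists x; split => //; apply: HB.
Qed.

Theorem corollary4p1 (R : realType) (n : nat) (e : rel 'I_n.+1)
    (a b : 'I_n.+1) :
  simple_graph e ->
  let S : set (cplx R) :=
    closure [set expmx (('i * RtoC t) *: adjmx R e) a b | t in [set t : R | 0 <= t]] in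
  [set z^* | z in S] = S.
Proof.
move=> Hg S.
have [w [lam Hcvg]] := @spectral_form R n e a b Hg.
pose f (t : R) := \sum_j w j * ex (t * lam j).
have gE : forall t, expmx (('i * RtoC t) *: adjmx R e) a b = f t.
  move=> t; rewrite /expmx mxE.
  exact: (cvg_lim (@norm_hausdorff _ _) (Hcvg t)).
have fconj : forall t, (f t)^* = f (- t).
  move=> t.
  have H1 : series (fun k => ((('i * RtoC (- t)) *: adjmx R e)^+k) a b / (k`!)%:R) @ \oo
             --> (f t)^*.
    have -> : series (fun k => ((('i * RtoC (- t)) *: adjmx R e)^+k) a b / (k`!)%:R) =
       (fun N => (series (fun k => ((('i * RtoC t) *: adjmx R e)^+k) a b / (k`!)%:R) N)^*).
      by apply: funext => N; rewrite conj_series.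
    exact: cvg_conj (Hcvg t).
  by rewrite -(cvg_lim (@norm_hausdorff _ _) H1) (cvg_lim (@norm_hausdorff _ _) (Hcvg (- t))).
have approx : forall t (eps : cplx R), 0 < eps -> exists s, 0 <= s /\ `|f (- t) - f s| < eps.
  move=> t eps eps0.
  pose W := \sum_j `|w j|.
  have W0 : 0 <= W by apply: sumr_ge0 => j _.
  pose delta := eps / (W + 1).
  have d0 : 0 < delta by rewrite divr_gt0 // ltr_wpDl.
  have [T [HT HTj]] := @recur R _ lam delta t d0.
  exists (T - t); split; first by rewrite subr_ge0.
  rewrite /f -sumrB.
  apply: le_lt_trans (ler_norm_sum _ _ _) _.
  apply: (@le_lt_trans _ _ (\sum_j `|w j| * delta)).
    apply: ler_sum => j _.
    have -> : ex ((T - t) * lam j) = ex (T * lam j) * ex (- t * lam j).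
      by rewrite -exD; congr ex; ring.
    rewrite -mulrBr normrM; apply: ler_wpM2l; first exact: normr_ge0.
    rewrite (_ : ex (- t * lam j) - ex (T * lam j) * ex (- t * lam j) =
                 ex (- t * lam j) * (1 - ex (T * lam j))); last by ring.
    by rewrite normrM norm_ex mul1r distrC ltW.
  rewrite -mulr_suml -/W /delta mulrCA gtr_pMr // ltr_pdivrMr ?ltr_wpDl // mul1r.
  by rewrite ltrDl ltr01.
have C1 : forall z, S z -> S (z^*).
  move=> z /closure_char Sz; apply/closure_char => eps eps0.
  have e2 : 0 < eps / 2 by rewrite divr_gt0.
  have [_ [t t0 <-] hx] := Sz _ e2.
  have [s [s0 hs]] := approx t _ e2.
  exists (expmx (('i * RtoC s) *: adjmx R e) a b); first by exists s.
  rewrite gE; rewrite gE in hx.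
  have -> : z^* - f s = (z - f t)^* + (f (- t) - f s) by rewrite conjB fconj; ring.
  apply: le_lt_trans (ler_normD _ _) _.
  by rewrite norm_conjC [eps](splitr eps) ltrD.
apply/seteqP; split.
  by move=> _ [z Sz <-]; exact: C1.
by move=> z Sz; exists z^*; [exact: C1 | exact: conjCK].
Qed.
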